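(* Let $\sigma_1\prec\dots\prec\sigma_m$ be sign strings, $\varphi\in\mathbb{R}$, and suppose $\gamma\in\mathscr{M}(Q)$ is $(\varphi,\varepsilon_j)$-quasicritical of type $\sigma_j$ for each $j\in[m]$, where $\varepsilon_j\in(0,\pi/4)$. Then $\varepsilon_{j+1}>2\varepsilon_j$ for each $j\in[m-1]$.
   Context: $[n]=\{1,\dots,n\}$; signs $\pm$ are identified with $\pm1$. A sign string is $\sigma:[l]\to\{\pm1\}$, $l\ge2$, with alternating consecutive values; $|\sigma|=l$; $\sigma_1\prec\sigma_2$ means $\sigma_1\neq\sigma_2$ and $\sigma_1=\sigma_2\circ f$ for some strictly increasing $f$. Fix $Q=(q,z)\in\mathbb{C}\times\mathbb{S}^1$, $z\ne-1$, $\theta_1\in(-\pi,\pi)$ with $e^{i\theta_1}=z$, and $r\ge2$. $\mathscr{M}(Q)$ is the space of regular $C^r$ curves $\gamma:[0,1]\to\mathbb{C}$ with $\gamma(0)=0$, unit tangent $\mathbf{t}_\gamma(0)=1$, $\gamma(1)=q$, $\mathbf{t}_\gamma(1)=z$, curvature $\kappa_\gamma\in(-1,1)$ everywhere, and $\theta_\gamma(1)=\theta_1$, where $\theta_\gamma$ is the continuous argument of $\mathbf{t}_\gamma$ with $\theta_\gamma(0)=0$. For $\varphi\in\mathbb{R}$ write $\varphi_\pm=\varphi\pm\pi/2$. Stretchability: for $\kappa_0\in(0,1)$ and $r_0,r_b\in\mathbb{R}$, $b>0$, let $F(u)=u/\sqrt{1-u^2}$ ($|u|<1$), $F=+\infty$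 for $u\ge1$, $-\infty$ for $u\le-1$; $g_\pm(x)=F(\pm\kappa_0x+r_0/\sqrt{1+r_0^2})$, $h_\pm(x)=F(\mp\kappa_0(x-b)+r_b/\sqrt{1+r_b^2})$; $\lambda_+$ (resp. $\lambda_-$) is the common real value of $g_+,h_+$ (resp. $g_-,h_-$) where their graphs meet, or $+\infty$ (resp. $-\infty$) if they do not. If $I\subset[0,1]$ is a closed interval and $\langle\mathbf{t}_\gamma(t),e^{i\psi}\rangle>0$ on $I$, then after translating and rotating by $-\psi$, $\gamma|_I$ is the graph $x\mapsto(x,y(x))$, $x\in[0,b]$; put $f=y'$, $r_0=f(0)$, $r_b=f(b)$. $\gamma|_I$ is $\kappa_0$-stretchable with respect to $e^{i\psi}$ if $|\kappa_\gamma|\le\kappa_0$ on $I$ and $0\in[\lambda_-,\lambda_+]$; it is stretchable with respect to $e^{i\psi}$ (or w.r.t. $\psi$) if it is $\kappa_0$-stretchable for some $\kappa_0\in(0,1)$. Quasicritical: for a sign string $\sigma$, $n=|\sigma|$, $\varphi\in\mathbb{R}$, $\varepsilon\in(0,\pi/4)$, $\gamma$ is $(\varphi,\varepsilon)$-quasicritical of type $\sigma$ if there are closed intervals $J_1<\dots<J_n$ in $[0,1]$ such that for each $k\in[n]$: (i) $\theta_\gamma(J_k)\subset(\varphi_-+2\varepsilon,\varphi_++\varepsilon)$ if $\sigma(k)=+$ and $\theta_\gamma(J_k)\subset(\varphi_--\varepsilon,\varphi_+-2\varepsilon)$ if $\sigma(k)=-$; (ii) $|\theta_\gamma(t)-\varphi|<\pi/2-2\varepsilon$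 for all $t\notin\operatorname{Int}(\bigcup_kJ_k)$; (iii) $J_k$ contains a closed subinterval $I_k$ with $|\theta_\gamma(t)-\varphi_{\sigma(k)}|<\varepsilon$ for all $t\in I_k$ and $\gamma|_{I_k}$ stretchable with respect to $\varphi_{\sigma(k)}$. *)

(* Defs.v *)
From Stdlib Require Import Reals Lra List.
Open Scope R_scope.

Inductive sgn : Set := splus | sminus.
Definition sgn_val (s : sgn) : R := match s with splus => 1 | sminus => -1 end.

(* a sign string sigma : [l] -> {+,-}, l >= 2, with alternating consecutive values;
   sigma(k) is  nth (k-1) sigma splus  (0-based list) *)
Definition sign_string (s : list sgn) : Prop :=
  (2 <= length s)%nat /\
  forall i : nat, (S i < length s)%nat -> nth i s splus <> nth (S i) s splus.

Definition sprec (s1 s2 : list sgn) : Prop :=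
  s1 <> s2 /\
  exists f : nat -> nat,
    (forall i, (i < length s1)%nat -> (f i < length s2)%nat) /\
    (forall i j, (i < j)%nat -> (j < length s1)%nat -> (f i < f j)%nat) /\
    (forall i, (i < length s1)%nat -> nth i s1 splus = nth (f i) s2 splus).

(* ---------- C^r curves on [0,1] ----------
   A plane curve gamma = (x,y) is given by families Dx, Dy : nat -> R -> R,
   where Dx 0 = x and Dx (k+1) is the derivative of Dx k on [0,1]
   (one-sided at the endpoints). *)
Definition deriv_within (f : R -> R) (a b t l : R) : Prop :=
  forall e, 0 < e -> exists d, 0 < d /\
    forall s, a <= s <= b -> s <> t -> Rabs (s - t) < d ->
      Rabs ((f s - f t) / (s - t) - l) < e.

Definition cont_within (f : R -> R) (a b t : R) : Prop :=
  forall e, 0 < e -> exists d, 0 < d /\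
    forall s, a <= s <= b -> Rabs (s - t) < d -> Rabs (f s - f t) < e.

Definition Cr_family (r : nat) (D : nat -> R -> R) : Prop :=
  (forall k t, (k < r)%nat -> 0 <= t <= 1 -> deriv_within (D k) 0 1 t (D (S k) t)) /\
  (forall t, 0 <= t <= 1 -> cont_within (D r) 0 1 t).

Definition speed (Dx Dy : nat -> R -> R) (t : R) : R :=
  sqrt (Dx 1%nat t ^ 2 + Dy 1%nat t ^ 2).

Definition tanx (Dx Dy : nat -> R -> R) (t : R) : R := Dx 1%nat t / speed Dx Dy t.
Definition tany (Dx Dy : nat -> R -> R) (t : R) : R := Dy 1%nat t / speed Dx Dy t.

Definition curv (Dx Dy : nat -> R -> R) (t : R) : R :=
  (Dx 1%nat t * Dy 2%nat t - Dy 1%nat t * Dx 2%nat t) / (speed Dx Dy t ^ 3).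

Definition is_arg (Dx Dy : nat -> R -> R) (theta : R -> R) : Prop :=
  (forall t, 0 <= t <= 1 -> cont_within theta 0 1 t) /\
  (forall t, 0 <= t <= 1 ->
     cos (theta t) = tanx Dx Dy t /\ sin (theta t) = tany Dx Dy t) /\
  theta 0 = 0.

(* gamma in M(Q), Q = (q, z), q = qx + i qy, z = e^{i th1}, with theta_gamma = theta *)
Definition in_MQ (r : nat) (qx qy th1 : R) (Dx Dy : nat -> R -> R) (theta : R -> R) : Prop :=
  Cr_family r Dx /\ Cr_family r Dy /\
  (forall t, 0 <= t <= 1 -> Dx 1%nat t <> 0 \/ Dy 1%nat t <> 0) /\
  Dx 0%nat 0 = 0 /\ Dy 0%nat 0 = 0 /\
  tanx Dx Dy 0 = 1 /\ tany Dx Dy 0 = 0 /\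
  Dx 0%nat 1 = qx /\ Dy 0%nat 1 = qy /\
  tanx Dx Dy 1 = cos th1 /\ tany Dx Dy 1 = sin th1 /\
  (forall t, 0 <= t <= 1 -> -1 < curv Dx Dy t < 1) /\
  is_arg Dx Dy theta /\ theta 1 = th1.

Inductive ext : Type := Fin (v : R) | PInf | NInf.

Definition ext_le (a b : ext) : Prop :=
  match a, b with
  | NInf, _ => True
  | _, PInf => True
  | Fin u, Fin v => u <= v
  | _, _ => False
  end.

Definition Fext (u : R) : ext :=
  if Rle_dec 1 u then PInf
  else if Rle_dec u (-1) then NInf
  else Fin (u / sqrt (1 - u ^ 2)).

Definition meet_value (g h : R -> ext) (dflt : ext) (L : ext) : Prop :=
  (exists x v, g x = Fin v /\ h x = Fin v /\ L = Fin v) \/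
  ((~ exists x v, g x = Fin v /\ h x = Fin v) /\ L = dflt).

Definition lam_plus (k0 r0 rb b : R) (L : ext) : Prop :=
  meet_value (fun x => Fext (k0 * x + r0 / sqrt (1 + r0 ^ 2)))
             (fun x => Fext (- k0 * (x - b) + rb / sqrt (1 + rb ^ 2))) PInf L.

Definition lam_minus (k0 r0 rb b : R) (L : ext) : Prop :=
  meet_value (fun x => Fext (- k0 * x + r0 / sqrt (1 + r0 ^ 2)))
             (fun x => Fext (k0 * (x - b) + rb / sqrt (1 + rb ^ 2))) NInf L.

(* Coordinates of gamma|_[a,c] after translating gamma(a) to 0 and rotating by -psi:
   X = <gamma - gamma(a), e^{i psi}>,  Y = <gamma - gamma(a), i e^{i psi}>.
   When <t_gamma, e^{i psi}> > 0 on [a,c], this is the graph x |-> (x, y(x)), x in [0,b],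
   with b = X(c) and f = y', so f(X(t)) = Y'(t)/X'(t). *)
Definition rotX (Dx Dy : nat -> R -> R) (psi a t : R) : R :=
  cos psi * (Dx 0%nat t - Dx 0%nat a) + sin psi * (Dy 0%nat t - Dy 0%nat a).
Definition graph_slope (Dx Dy : nat -> R -> R) (psi t : R) : R :=
  (- sin psi * Dx 1%nat t + cos psi * Dy 1%nat t) /
  (cos psi * Dx 1%nat t + sin psi * Dy 1%nat t).

Definition k0_stretchable (k0 : R) (Dx Dy : nat -> R -> R) (psi a c : R) : Prop :=
  (forall t, a <= t <= c -> Rabs (curv Dx Dy t) <= k0) /\
  (let b := rotX Dx Dy psi a c in
   let r0 := graph_slope Dx Dy psi a in
   let rb := graph_slope Dx Dy psi c in
   exists Lm Lp, lam_minus k0 r0 rb b Lm /\ lam_plus k0 r0 rb b Lp /\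
                 ext_le Lm (Fin 0) /\ ext_le (Fin 0) Lp).

Definition stretchable (Dx Dy : nat -> R -> R) (psi a c : R) : Prop :=
  0 <= a /\ a < c /\ c <= 1 /\
  (forall t, a <= t <= c -> cos psi * tanx Dx Dy t + sin psi * tany Dx Dy t > 0) /\
  exists k0, 0 < k0 < 1 /\ k0_stretchable k0 Dx Dy psi a c.

Definition in_interior (U : R -> Prop) (t : R) : Prop :=
  exists d, 0 < d /\ forall s, Rabs (s - t) < d -> U s.

(* gamma (with argument function theta) is (phi, eps)-quasicritical of type sigma.
   J_k = [a k, c k], I_k = [p k, q k], for k = 0, ..., n-1 (0-based). *)
Definition quasicritical (Dx Dy : nat -> R -> R) (theta : R -> R)
    (phi eps : R) (sigma : list sgn) : Prop :=
  let n := length sigma in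
  exists a c p q : nat -> R,
    (forall k, (k < n)%nat -> 0 <= a k <= c k /\ c k <= 1) /\
    (forall k, (S k < n)%nat -> c k < a (S k)) /\
    (forall k t, (k < n)%nat -> a k <= t <= c k ->
       match nth k sigma splus with
       | splus => phi - PI / 2 + 2 * eps < theta t < phi + PI / 2 + eps
       | sminus => phi - PI / 2 - eps < theta t < phi + PI / 2 - 2 * eps
       end) /\
    (forall t, 0 <= t <= 1 ->
       ~ in_interior (fun s => exists k, (k < n)%nat /\ a k <= s <= c k) t ->
       Rabs (theta t - phi) < PI / 2 - 2 * eps) /\
    (forall k, (k < n)%nat ->
       a k <= p k /\ p k <= q k /\ q k <= c k /\
       (forall t, p k <= t <= q k ->
          Rabs (theta t - (phi + sgn_val (nth k sigma splus) * (PI / 2))) < eps) /\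
       stretchable Dx Dy (phi + sgn_val (nth k sigma splus) * (PI / 2)) (p k) (q k)).

(* Main.v *)
Require Import Defs.
From Stdlib Require Import Reals Lra List Lia Classical.
Open Scope R_scope.

Lemma incr_bounds (n1 n2 : nat) (f : nat -> nat) :
  (forall i, (i < n1)%nat -> (f i < n2)%nat) ->
  (forall i j, (i < j)%nat -> (j < n1)%nat -> (f i < f j)%nat) ->
  forall i, (i < n1)%nat -> (i <= f i)%nat /\ (f i + n1 <= n2 + i)%nat.
Proof.
  intros Hr Hi. split.
  - induction i as [|i IH]; [lia|].
    assert (f i < f (S i))%nat by (apply Hi; lia).
    specialize (IH ltac:(lia)). lia.
  - assert (G : forall k i, (i + k + 1 = n1)%nat -> (f i + n1 <= n2 + i)%nat).
    { induction k as [|k IH]; intros i0 E.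
      + assert (f i0 < n2)%nat by (apply Hr; lia). lia.
      + specialize (IH (S i0) ltac:(lia)).
        assert (f i0 < f (S i0))%nat by (apply Hi; lia). lia. }
    apply (G (n1 - 1 - i)%nat). lia.
Qed.

Theorem lemma3p7 (r : nat) (qx qy th1 : R) (Dx Dy : nat -> R -> R) (theta : R -> R)
    (m : nat) (sig : nat -> list sgn) (phi : R) (eps : nat -> R) :
  (2 <= r)%nat ->
  - PI < th1 < PI ->
  in_MQ r qx qy th1 Dx Dy theta ->
  (forall j, (j < m)%nat -> sign_string (sig j)) ->
  (forall j, (S j < m)%nat -> sprec (sig j) (sig (S j))) ->
  (forall j, (j < m)%nat -> 0 < eps j < PI / 4) ->
  (forall j, (j < m)%nat -> quasicritical Dx Dy theta phi (eps j) (sig j)) ->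
  forall j, (S j < m)%nat -> eps (S j) > 2 * eps j.
Proof.
  intros _ _ _ Hss Hpr He Hq j Hj.
  destruct (Rlt_le_dec (2 * eps j) (eps (S j))) as [Hlt|Hle]; [lra|exfalso].
  set (s1 := sig j) in *. set (s2 := sig (S j)) in *.
  set (n1 := length s1). set (n2 := length s2).
  assert (Hs1 : sign_string s1) by (apply Hss; lia).
  assert (Hs2 : sign_string s2) by (apply Hss; lia).
  destruct (Hpr j Hj) as [Hneq [f [Hfr [Hfi Hfe]]]].
  fold s1 s2 in Hneq, Hfr, Hfi, Hfe.
  assert (He1 : 0 < eps j < PI / 4) by (apply He; lia).
  assert (He2 : 0 < eps (S j) < PI / 4) by (apply He; lia).
  set (e1 := eps j) in *. set (e2 := eps (S j)) in *.
  destruct (Hq j ltac:(lia)) as (a1 & c1 & p1 & q1 & H1sep & H1ord & H1i & H1ii & H1iii).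
  destruct (Hq (S j) Hj) as (a2 & c2 & p2 & q2 & H2sep & H2ord & H2i & H2ii & H2iii).
  fold s1 e1 n1 in H1sep, H1ord, H1i, H1ii, H1iii.
  fold s2 e2 n2 in H2sep, H2ord, H2i, H2ii, H2iii.
  assert (HA : forall k, (k < n2)%nat -> exists i, (i < n1)%nat /\
             a1 i <= p2 k <= c1 i /\ nth i s1 splus = nth k s2 splus).
  { intros k Hk.
    destruct (H2sep k Hk) as [[Ha Hac] Hc1].
    destruct (H2iii k Hk) as (Hap & Hpq & Hqc & Hth & _).
    assert (Ht := Hth (p2 k) ltac:(lra)).
    assert (Hint : in_interior (fun s => exists k0, (k0 < n1)%nat /\ a1 k0 <= s <= c1 k0) (p2 k)).
    { apply NNPP; intro Hn.
      assert (Hb := H1ii (p2 k) ltac:(lra) Hn).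
      destruct (nth k s2 splus); simpl in Ht;
      unfold Rabs in *; destruct (Rcase_abs _); destruct (Rcase_abs _); lra. }
    destruct Hint as [d [Hd Hs]].
    destruct (Hs (p2 k)) as [i [Hi Hai]].
    { rewrite Rminus_eq_0, Rabs_R0; lra. }
    exists i; split; [exact Hi|split; [exact Hai|]].
    assert (Hm := H1i i (p2 k) Hi Hai).
    destruct (nth i s1 splus), (nth k s2 splus); simpl in Ht; auto;
    unfold Rabs in *; destruct (Rcase_abs _); lra. }
  assert (Hch : forall d i : nat, (i + S d < n1)%nat -> c1 i < a1 (i + S d)%nat).
  { induction d as [|d IH]; intros i Hi.
    - replace (i + 1)%nat with (S i) by lia. apply H1ord; lia.
    - specialize (IH i ltac:(lia)).
      destruct (H1sep (i + S d)%nat ltac:(lia)) as [[_ X] _].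
      assert (Y := H1ord (i + S d)%nat ltac:(lia)).
      replace (i + S (S d))%nat with (S (i + S d)) by lia. lra. }
  assert (HB : forall k, (k < n2)%nat -> exists i, (k <= i)%nat /\ (i < n1)%nat /\
             a1 i <= p2 k <= c1 i /\ nth i s1 splus = nth k s2 splus).
  { induction k as [|k IH]; intros Hk.
    - destruct (HA 0%nat Hk) as [i [Hi X]]. exists i. split; [lia|auto].
    - destruct (IH ltac:(lia)) as [i [Hki [Hi [Hp Hs]]]].
      destruct (HA (S k) Hk) as [i' [Hi' [Hp' Hs']]].
      destruct (Nat.lt_ge_cases i i') as [Hlt'|Hge].
      + exists i'. split; [lia|auto].
      + exfalso.
        destruct (Nat.eq_dec i i') as [->|Hne].
        * destruct Hs2 as [_ Halt]. apply (Halt k Hk). congruence.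
        * assert (X := Hch (i - i' - 1)%nat i' ltac:(lia)).
          replace (i' + S (i - i' - 1))%nat with i in X by lia.
          destruct (H2iii k ltac:(lia)) as (_ & Hpq & Hqc & _).
          destruct (H2iii (S k) Hk) as (Hap & _).
          assert (Y := H2ord k Hk). lra. }
  destruct Hs2 as [Hl2 _]. destruct Hs1 as [Hl1 _].
  destruct (HB (n2 - 1)%nat ltac:(fold n2; lia)) as [i [Hki [Hi _]]].
  destruct (incr_bounds n1 n2 f Hfr Hfi 0%nat ltac:(fold n1; lia)) as [_ Hb].
  assert (Heq : n1 = n2) by lia.
  apply Hneq. apply nth_ext with splus splus; [exact Heq|].
  intros k Hk. rewrite Hfe by exact Hk.
  destruct (incr_bounds n1 n2 f Hfr Hfi k Hk) as [B1 B2].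
  fold n1 in Hk. replace (f k) with k by lia. reflexivity.
Qed.
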